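(* Let $G$ be a graph with minimum degree $\delta(G)\ge 2$. Then (1) $G$ has a $\gamma$-set $D$ such that every vertex in $D$ has at least two neighbors in $V_G-D$; and (2) $\gamma(G)=\gamma_{\rm cer}(G)$.
   Context: All graphs are finite and simple; $\delta(G)$ denotes the minimum degree of $G$. A set $D\subseteq V_G$ is a dominating set of $G$ if every vertex of $V_G-D$ has a neighbor in $D$; $\gamma(G)$ is the minimum cardinality of a dominating set, and a $\gamma$-set is a dominating set of cardinality $\gamma(G)$. A set $D\subseteq V_G$ is a certified dominating set of $G$ if $D$ is a dominating set of $G$ and every vertex of $D$ has either zero or at least two neighbors in $V_G-D$; $\gamma_{\rm cer}(G)$ is the minimum cardinality of a certified dominating set of $G$. *)

(* Defs.v *)
From mathcomp Require Import all_boot.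
Set Implicit Arguments. Unset Strict Implicit. Unset Printing Implicit Defensive.

Section Graph.
Variables (T : finType) (e : rel T).

Definition simple_graph : Prop := symmetric e /\ irreflexive e.

Definition nbhd (v : T) : {set T} := [set u | e v u].
Definition deg (v : T) : nat := #|nbhd v|.

Definition min_degree_ge (k : nat) : Prop := forall v : T, k <= deg v.

Definition dominating (D : {set T}) : bool :=
  [forall v, (v \notin D) ==> [exists u in D, e v u]].

Definition certified_dominating (D : {set T}) : bool :=
  dominating D &&
  [forall v in D, (#|nbhd v :\: D| == 0) || (2 <= #|nbhd v :\: D|)].

Lemma dominating_setT : dominating setT.
Proof. by apply/forallP => v; rewrite in_setT. Qed.

Lemma certified_setT : certified_dominating setT.
Proof.
rewrite /certified_dominating dominating_setT /=.
apply/forallP => v; apply/implyP => _.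
by rewrite setDT cards0.
Qed.

Lemma ex_dominating : exists n, [exists D : {set T}, dominating D && (#|D| == n)].
Proof. by exists #|[set: T]|; apply/existsP; exists setT; rewrite dominating_setT eqxx. Qed.

Lemma ex_certified :
  exists n, [exists D : {set T}, certified_dominating D && (#|D| == n)].
Proof. by exists #|[set: T]|; apply/existsP; exists setT; rewrite certified_setT eqxx. Qed.

Definition domination_number : nat := ex_minn ex_dominating.
Definition cert_domination_number : nat := ex_minn ex_certified.

Definition gamma_set (D : {set T}) : bool :=
  dominating D && (#|D| == domination_number).

End Graph.

(* Main.v *)
Require Import Defs.
From mathcomp Require Import all_boot.
Set Implicit Arguments. Unset Strict Implicit. Unset Printing Implicit Defensive.

Lemma gamma_le (T : finType) (e : rel T) (D : {set T}) :
  dominating e D -> domination_number e <= #|D|.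
Proof.
move=> hD; rewrite /domination_number; case: ex_minnP => m _ H; apply: H.
by apply/existsP; exists D; rewrite hD eqxx.
Qed.

Lemma gamma_ex (T : finType) (e : rel T) : exists D, gamma_set e D.
Proof.
rewrite /gamma_set /domination_number; case: ex_minnP => m /existsP [D hD] _.
by exists D.
Qed.

Definition Pin (T : finType) (e : rel T) (D : {set T}) : {set T * T} :=
  [set p | (p.1 \in D) && (p.2 \in D) && e p.1 p.2].

Lemma drop_dom (T : finType) (e : rel T) (D : {set T}) v w :
  w \in D -> w != v -> e v w ->
  (forall x, x \notin D -> e x v -> exists2 y, y \in D :\ v & e x y) ->
  dominating e D -> dominating e (D :\ v).
Proof.
move=> wD wv evw H hD; apply/forallP => x; apply/implyP => hx.
case: (eqVneq x v) => [->|xv].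
  by apply/exists_inP; exists w => //; rewrite in_setD1 wv.
have xD : x \notin D by move: hx; rewrite in_setD1 xv.
move/forallP: hD => /(_ x) /implyP /(_ xD) /exists_inP [y yD exy].
case: (eqVneq y v) => [yv|yv].
  by subst y; case: (H x xD exy) => y' y'D exy'; apply/exists_inP; exists y'.
by apply/exists_inP; exists y => //; rewrite in_setD1 yv.
Qed.

Lemma key (T : finType) (e : rel T) :
  simple_graph e -> min_degree_ge e 2 -> forall D, gamma_set e D ->
  (forall v, v \in D -> 2 <= #|nbhd e v :\: D|) \/
  exists D', gamma_set e D' /\ #|Pin e D'| < #|Pin e D|.
Proof.
move=> [esym eirr] hdeg D /andP[hD /eqP hc].
case: (boolP [forall v in D, 2 <= #|nbhd e v :\: D|]) => [/forall_inP H|];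
  first by left.
rewrite negb_forall_in => /exists_inP [v vD]; rewrite -ltnNge ltnS => hv.
have nodrop : ~~ dominating e (D :\ v).
  apply/negP => /gamma_le; rewrite -hc (cardsD1 v D) vD.
  by rewrite add1n ltnn.
have inN x : (x \in nbhd e v) = e v x by rewrite /nbhd inE.
move: hv; rewrite leq_eqVlt ltnS leqn0 => /orP[/cards1P [u hu] | /eqP/cards0_eq h0].
- have uN : u \in nbhd e v :\: D by rewrite hu set11.
  move: (uN); rewrite inE => /andP[uD]; rewrite inN => evu.
  have : ~~ (nbhd e v \subset [set u]).
    apply/negP => /subset_leq_card; rewrite cards1 => h.
    by move: (hdeg v) => h2; move: (leq_trans h2 h).
  case/subsetPn => w wN wnu.
  have wD : w \in D.
    apply/negPn/negP => wnD.
    by move: wnu; rewrite -hu inE wnD wN.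
  have wv : w != v by apply/eqP => wv; subst w; move: wN; rewrite inN eirr.
  have evw : e v w by rewrite -inN.
  case: (boolP [exists w' in D :\ v, e u w']) => [/exists_inP [w' w'D euw'] | noW].
    exfalso; move/negP: nodrop; apply; apply: (drop_dom wD wv evw) => //.
    move=> x xD exv.
    have : x \in nbhd e v :\: D by rewrite inE xD inN esym.
    by rewrite hu inE => /eqP ->; exists w'.
  right; exists (u |: (D :\ v)).
  have uv : u != v by apply/eqP => uv; subst u; move: uD; rewrite vD.
  split.
    apply/andP; split; last first.
      by rewrite cardsU1 in_setD1 (negbTE uD) andbF add1n -hc (cardsD1 v D) vD.
    apply/forallP => x; apply/implyP => hx.
    case: (eqVneq x v) => [->|xv].
      by apply/exists_inP; exists u => //; rewrite setU11.
    have xD : x \notin D by move: hx; rewrite !inE xv /= negb_or => /andP[_].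
    move/forallP: hD => /(_ x) /implyP /(_ xD) /exists_inP [y yD exy].
    case: (eqVneq y v) => [yv|yv].
      subst y.
      have : x \in nbhd e v :\: D by rewrite inE xD inN esym.
      rewrite hu inE => /eqP xu; subst x.
      by move: hx; rewrite setU11.
    by apply/exists_inP; exists y => //; rewrite !inE yv yD orbT.
  apply: proper_card; apply/properP; split.
    apply/subsetP => [[a b]]; rewrite !inE /= => /andP[/andP[ha hb] eab].
    move: ha hb; case: (eqVneq a u) => [au|au] /=.
      subst a => _ hb.
      case: (eqVneq b u) => [bu|bu]; first by subst b; move: eab; rewrite eirr.
      move: hb; rewrite (negbTE bu) /= => /andP[bv bD].
      by move/exists_inP: noW; case; exists b => //; rewrite in_setD1 bv.
    move=> /andP[av aD]; case: (eqVneq b u) => [bu|bu] /=.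
      subst b => _.
      by move/exists_inP: noW; case; exists a; [rewrite in_setD1 av aD | rewrite esym].
    by move=> /andP[_ bD]; rewrite aD bD eab.
  exists (v, w); first by rewrite !inE /= vD wD evw.
  rewrite !inE /= eqxx; apply/negP => /andP[/andP[/orP[/eqP vu|/andP[]//] _] _].
  by move: uv; rewrite vu eqxx.
- exfalso; move/negP: nodrop; apply.
  have : nbhd e v != set0 by rewrite -card_gt0; apply: leq_trans (hdeg v).
  case/set0Pn => w wN.
  have wD : w \in D.
    apply/negPn/negP => wnD.
    have : w \in nbhd e v :\: D by rewrite inE wnD wN.
    by rewrite h0 inE.
  have wv : w != v by apply/eqP => wv; subst w; move: wN; rewrite inN eirr.
  apply: (drop_dom wD wv) => //; first by rewrite -inN.
  move=> x xD exv.
  have : x \in nbhd e v :\: D by rewrite inE xD inN esym.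
  by rewrite h0 inE.
Qed.

Lemma exgood (T : finType) (e : rel T) :
  simple_graph e -> min_degree_ge e 2 ->
  forall n D, gamma_set e D -> #|Pin e D| < n ->
  exists D', gamma_set e D' /\ forall v, v \in D' -> 2 <= #|nbhd e v :\: D'|.
Proof.
move=> hs hd; elim=> [//|n IH] D hD hn.
case: (key hs hd hD) => [H|[D' [hD' lt]]]; first by exists D.
by apply: (IH D' hD'); apply: leq_trans lt _.
Qed.

Theorem corollary2p3 (T : finType) (e : rel T) :
  simple_graph e -> min_degree_ge e 2 ->
  (exists D : {set T}, gamma_set e D /\
     forall v, v \in D -> 2 <= #|nbhd e v :\: D|) /\
  domination_number e = cert_domination_number e.
Proof.
move=> hs hd.
have [D0 hD0] := gamma_ex e.
have [D [hD good]] := exgood hs hd hD0 (ltnSn _).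
split; first by exists D.
apply/eqP; rewrite eqn_leq; apply/andP; split.
  rewrite /cert_domination_number; case: ex_minnP => m /existsP [C /andP[hC /eqP <-]] _.
  by apply: gamma_le; case/andP: hC.
move: hD => /andP[hD /eqP <-].
rewrite /cert_domination_number; case: ex_minnP => m _ H; apply: H.
apply/existsP; exists D; rewrite eqxx andbT /certified_dominating hD /=.
by apply/forall_inP => v vD; rewrite good ?orbT.
Qed.
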